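(* There is an absolute constant $c>0$ such that for all $\varepsilon,\delta\in(0,1)$ and every positive integer $m< c\,\varepsilon^{-1}\delta^{-1}$, there exists a finite multiset $A$ of points in $\mathbb{R}^d$ such that, if $S$ consists of $m$ points drawn independently and uniformly at random from $A$, then the empirical mean $\hat\mu=\frac1m\sum_{p\in S}p$ fails to be a $(1+\varepsilon)$-approximate mean of $A$ with probability greater than $\delta$. In other words, $\Omega(\varepsilon^{-1}\delta^{-1})$ independently sampled points are required for the empirical mean to be a $(1+\varepsilon)$-approximate mean with probability at least $1-\delta$ on every instance.
   Context: For a finite multiset $A\subset\mathbb{R}^d$, let $\mathrm{Opt}=\min_{x\in\mathbb{R}^d}\sum_{p\in A}\|p-x\|^2$. A point $x$ is a $(1+\varepsilon)$-approximate mean of $A$ if $\sum_{p\in A}\|p-x\|^2\le(1+\varepsilon)\mathrm{Opt}$. *)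

(* Defs.v *)
From HB Require Import structures.
From mathcomp Require Import all_boot all_order all_algebra.
From mathcomp Require Import boolp classical_sets reals.
Set Implicit Arguments. Unset Strict Implicit. Unset Printing Implicit Defensive.
Import Order.TTheory GRing.Theory Num.Theory.
Local Open Scope ring_scope.
Local Open Scope classical_set_scope.

(* Points of R^d are row vectors 'rV[R]_d. A finite multiset of n points is
   A : 'I_n -> 'rV[R]_d (repetitions allowed). *)

Definition sqdist (R : realType) (d : nat) (p x : 'rV[R]_d) : R :=
  \sum_(j < d) (p ord0 j - x ord0 j) ^+ 2.

Definition cost (R : realType) (d n : nat) (A : 'I_n -> 'rV[R]_d) (x : 'rV[R]_d) : R :=
  \sum_(i < n) sqdist (A i) x.

(* Opt = min_x cost A x (taken as the infimum; the minimum is attained) *)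
Definition Opt (R : realType) (d n : nat) (A : 'I_n -> 'rV[R]_d) : R :=
  inf (range (cost A)).

Definition approx_mean (R : realType) (d n : nat) (A : 'I_n -> 'rV[R]_d)
  (eps : R) (x : 'rV[R]_d) : bool :=
  cost A x <= (1 + eps) * Opt A.

Definition emp_mean (R : realType) (d n m : nat) (A : 'I_n -> 'rV[R]_d)
  (S : {ffun 'I_m -> 'I_n}) : 'rV[R]_d :=
  (m%:R)^-1 *: \sum_(k < m) A (S k).

(* Probability, over m i.i.d. uniform draws from A (uniform over the n^m index
   tuples), that the empirical mean is NOT a (1+eps)-approximate mean. *)
Definition fail_prob (R : realType) (d n m : nat) (A : 'I_n -> 'rV[R]_d) (eps : R) : R :=
  (#|[set S : {ffun 'I_m -> 'I_n} | ~~ approx_mean A eps (emp_mean A S)]|)%:R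
  / ((n ^ m)%N)%:R.

(* Main.v *)
Require Import Defs.
From HB Require Import structures.
From mathcomp Require Import all_boot all_order all_algebra.
From mathcomp Require Import boolp classical_sets reals.
From mathcomp Require Import ring lra zify.
Import Order.TTheory GRing.Theory Num.Theory.
Local Open Scope ring_scope.

Definition Aex (R : realType) (d n : nat) : 'I_n -> 'rV[R]_d :=
  fun i => (val i == 0%N)%:R *: const_mx 1.

Lemma sqdist_const (R : realType) d (a b : R) :
  sqdist (a *: (const_mx 1 : 'rV[R]_d)) (b *: const_mx 1) = d%:R * (a - b) ^+ 2.
Proof.
rewrite /sqdist; under eq_bigr do rewrite !mxE !mulr1.
by rewrite sumr_const card_ord mulr_natl.
Qed.

Lemma cost_t (R : realType) d n (t : R) : (0 < n)%N ->
  cost (Aex R d n) (t *: const_mx 1) = d%:R * (n%:R * t ^+ 2 - 2 * t + 1).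
Proof.
case: n => // n _; rewrite /cost big_ord_recl /=.
under eq_bigr do rewrite /Aex sqdist_const /=.
rewrite sqdist_const /= sumr_const card_ord -mulr_natl.
rewrite -!mulrnAr -mulrDr; congr (_ * _).
rewrite mulr1n -natr1 mulr_natl; ring.
Qed.

Lemma cost_ge0 (R : realType) d n (A : 'I_n -> 'rV[R]_d) x : 0 <= cost A x.
Proof.
rewrite /cost; apply: sumr_ge0 => i _; rewrite /sqdist.
by apply: sumr_ge0 => j _; rewrite sqr_ge0.
Qed.

Lemma Opt_le (R : realType) d n : (0 < n)%N ->
  Opt (Aex R d n) <= d%:R * (1 - n%:R^-1).
Proof.
move=> n0; have := @ge_inf R (range (cost (Aex R d n))).
have hl : has_lbound (range (cost (Aex R d n))).
  by exists 0 => y [x _ <-]; apply: cost_ge0.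
move=> /(_ hl) H.
have := H _ (ex_intro2 _ _ (n%:R^-1 *: const_mx 1) I erefl).
rewrite cost_t // /Opt => /le_trans; apply; apply: ler_wpM2l => //.
have nz : n%:R != 0 :> R by rewrite pnatr_eq0 -lt0n.
rewrite expr2 mulrA mulfV // mul1r; lra.
Qed.

Lemma fail_t (R : realType) d n (eps t : R) : (0 < d)%N -> (0 < n)%N -> 0 < eps ->
  eps * (n%:R - 1) < (n%:R * t - 1) ^+ 2 ->
  ~~ approx_mean (Aex R d n) eps (t *: const_mx 1).
Proof.
move=> d0 n0 e0 H; rewrite /approx_mean -ltNge cost_t //.
have e1 : 0 <= 1 + eps by lra.
apply: (le_lt_trans (ler_wpM2l e1 (Opt_le R d n n0))).
have dp : 0 < d%:R :> R by rewrite ltr0n.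
have np : 0 < n%:R :> R by rewrite ltr0n.
rewrite mulrCA ltr_pM2l //.
have nu : n%:R * n%:R^-1 = 1 :> R by rewrite mulfV ?gt_eqF.
have up : 0 < n%:R^-1 :> R by rewrite invr_gt0.
have -> : n%:R * t ^+ 2 - 2 * t + 1 = n%:R^-1 * ((n%:R * t - 1) ^+ 2 + n%:R - 1).
  by field; rewrite gt_eqF.
have -> : (1 + eps) * (1 - n%:R^-1) = n%:R^-1 * ((1 + eps) * (n%:R - 1)).
  by field; rewrite gt_eqF.
rewrite ltr_pM2l //; lra.
Qed.

Lemma emp_meanE (R : realType) d n m (S : {ffun 'I_m -> 'I_n}) :
  emp_mean (Aex R d n) S =
  (m%:R^-1 * \sum_(k < m) ((val (S k) == 0%N)%:R : R)) *: const_mx 1.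
Proof. by rewrite /emp_mean /Aex -scaler_suml scalerA. Qed.

Lemma fail_hit (R : realType) d n m (eps : R) (S : {ffun 'I_m -> 'I_n}) (k : 'I_m) :
  (0 < d)%N -> (0 < m)%N -> 0 < eps -> (2 * m <= n)%N ->
  4 * eps * m%:R ^+ 2 <= n%:R -> val (S k) == 0%N ->
  ~~ approx_mean (Aex R d n) eps (emp_mean (Aex R d n) S).
Proof.
move=> d0 m0 e0 mn en hk.
have n0 : (0 < n)%N by apply: leq_trans mn; rewrite muln_gt0.
rewrite emp_meanE; apply: fail_t => //.
set s := \sum_(k < m) _.
have s1 : 1 <= s.
  rewrite /s (bigD1 k) //= hk -[X in X <= _]addr0 lerD2l.
  by apply: sumr_ge0 => i _; rewrite ler0n.
have mp : 0 < m%:R :> R by rewrite ltr0n.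
have mn' : 2 * m%:R <= n%:R :> R by rewrite -natrM ler_nat.
set t := m%:R^-1 * s.
have mt : m%:R * t = s by rewrite /t mulrA mulfV ?gt_eqF // mul1r.
set T := n%:R * t - 1.
have h1 : n%:R <= 2 * m%:R * T.
  have -> : 2 * m%:R * T = 2 * n%:R * (m%:R * t) - 2 * m%:R by rewrite /T; ring.
  rewrite mt; nra.
have np : 0 < n%:R :> R by rewrite ltr0n.
have h2 : n%:R ^+ 2 <= 4 * m%:R ^+ 2 * T ^+ 2.
  have -> : 4 * m%:R ^+ 2 * T ^+ 2 = (2 * m%:R * T) ^+ 2 by ring.
  rewrite ler_sqr ?nnegrE //; lra.
nra.
Qed.

Lemma fail_miss (R : realType) d n m (eps : R) (S : {ffun 'I_m -> 'I_n}) :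
  (0 < d)%N -> (0 < n)%N -> 0 < eps -> eps * (n%:R - 1) < 1 ->
  (forall k, val (S k) != 0%N) ->
  ~~ approx_mean (Aex R d n) eps (emp_mean (Aex R d n) S).
Proof.
move=> d0 n0 e0 en hk.
rewrite emp_meanE big1 ?mulr0 ?mulr0; last by move=> k _; rewrite (negbTE (hk k)).
by apply: fail_t => //; rewrite mulr0 sub0r sqrrN expr1n.
Qed.

Lemma binom_lb (a m : nat) : (a ^ m.+1 + m.+1 * a ^ m <= a.+1 ^ m.+1)%N.
Proof.
elim: m => [|m IH]; first by rewrite !expn1 expn0 muln1 addn1.
move: IH; rewrite (expnS a.+1) !expnS.
set x := (a ^ m)%N; set y := (a.+1 ^ m.+1)%N => IH.
nia.
Qed.

Theorem theorem5p2 (R : realType) :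
  exists c : R, 0 < c /\
    forall (d : nat), (0 < d)%N ->
    forall (eps delta : R), 0 < eps < 1 -> 0 < delta < 1 ->
    forall (m : nat), (0 < m)%N -> m%:R < c / (eps * delta) ->
    exists (n : nat) (A : 'I_n -> 'rV[R]_d),
      (0 < n)%N /\ delta < fail_prob m A eps.
Proof.
exists (1/32); split; first lra.
move=> d d0 eps delta /andP[e0 e1] /andP[dl0 dl1] m m0 hm.
have mp : 0 < m%:R :> R by rewrite ltr0n.
have edm : eps * delta * m%:R < 1/32.
  by move: hm; rewrite ltr_pdivlMr ?mulr_gt0 // mulrC.
have [small|big] := lerP (4 * eps * m%:R) 1.
- exists (2 * m)%N, (Aex R d (2 * m)); split; first by rewrite muln_gt0.
  have n0 : (0 < 2 * m)%N by rewrite muln_gt0.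
  rewrite /fail_prob.
  set Fail := (X in #|X|).
  have -> : #|Fail| = #|{ffun 'I_m -> 'I_(2 * m)}|.
    apply: eq_card => S.
    suff -> : S \in Fail by [].
    apply: mem_set; rewrite /=.
    case: (pickP (fun k => val (S k) == 0%N)) => [k hk | none].
      apply: fail_hit hk => //.
      by rewrite natrM; nra.
    apply: fail_miss => //; last by move=> k; rewrite none.
    by rewrite natrM; nra.
  rewrite card_ffun !card_ord divff //.
  by rewrite pnatr_eq0 -lt0n expn_gt0 n0.
- set x := 4 * eps * m%:R ^+ 2.
  have x0 : 0 <= x by rewrite /x; apply: mulr_ge0; [nra|apply: sqr_ge0].
  have [tl tu] := andP (truncn_itv x0).
  set K := Num.truncn x in tl tu.
  set n' := (2 * m + K)%N.
  exists n'.+1, (Aex R d n'.+1); split => //.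
  set i0 : 'I_n'.+1 := ord0.
  set Miss := [set S : {ffun 'I_m -> 'I_n'.+1} | S \in ffun_on (predC1 i0)].
  rewrite /fail_prob; set Fail := (X in #|X|).
  have sub : ~: Miss \subset Fail.
    apply/fintype.subsetP => S; rewrite finset.in_setC => hS; apply: mem_set => /=.
    case: (pickP (fun k => val (S k) == 0%N)) => [k hk | none].
      apply: fail_hit hk => //; first by rewrite /n' leqW // leq_addr.
      apply: (le_trans (ltW tu)); by rewrite ler_nat /n' ltnS leq_addl.
    exfalso; move/negP: hS; apply; rewrite finset.inE; apply/ffun_onP => k /=.
    by rewrite !inE; apply/negP => /eqP hk; move: (none k); rewrite hk.
  have c1 := subset_leq_card sub.
  have c2 := cardsC Miss.
  rewrite cardsE card_ffun_on cardC1 card_ffun !card_ord /= in c2.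
  have hb := binom_lb n' m.-1.
  rewrite prednK // in hb.
  rewrite ltr_pdivlMr ?ltr0n ?expn_gt0 //.
  have dl : delta < 1/8.
    have h1 : delta < delta * (4 * eps * m%:R) by rewrite ltr_pMr.
    have h2 : delta * (4 * eps * m%:R) = 4 * (eps * delta * m%:R) by ring.
    lra.
  have hn' : n'%:R <= 2 * m%:R + x :> R by rewrite /n' natrD natrM; lra.
  have key : delta * (n'%:R + m%:R) < m%:R.
    have h3 : delta * x = 4 * (eps * delta * m%:R) * m%:R by rewrite /x; ring.
    have h4 : delta * n'%:R <= delta * (2 * m%:R + x) by rewrite ler_pM2l.
    have h5 : 4 * (eps * delta * m%:R) * m%:R <= 4 * (1/32) * m%:R.
      by rewrite ler_pM2r // ler_pM2l //; lra.
    have h6 : delta * m%:R <= 1/8 * m%:R by rewrite ler_pM2r //; lra.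
    lra.
  have a0 : 0 < (n' ^ m.-1)%:R :> R.
    by rewrite ltr0n expn_gt0 /n' addn_gt0 muln_gt0 m0.
  have F : ((n'.+1 ^ m)%:R : R) <= #|Fail|%:R + (n' ^ m)%:R.
    by rewrite -natrD ler_nat -c2 addnC leq_add2r.
  move: hb; rewrite -(ler_nat R) natrD natrM => hb.
  have Ma : (n' ^ m)%:R = n'%:R * (n' ^ m.-1)%:R :> R.
    by rewrite -natrM -expnS prednK.
  rewrite Ma in hb F.
  set a := ((n' ^ m.-1)%:R : R) in a0 hb F Ma.
  set N1 := ((n'.+1 ^ m)%:R : R) in hb F *.
  set FF := (#|Fail|%:R : R) in F *.
  set nn := (n'%:R : R) in hb F key.
  set mm := (m%:R : R) in hb F key.
  have k1 : 0 < (mm - delta * (nn + mm)) * a by apply: mulr_gt0; lra.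
  have k2 : 0 <= (1 - delta) * (N1 - (nn * a + mm * a)) by apply: mulr_ge0; lra.
  nra.
Qed.
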